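(* Let $\Sigma$ be a $p\times p$ positive definite correlation matrix, $\beta\in\mathbb{R}^p$, $\sigma>0$, $n\ge1$, $\mu_n=\sqrt{2\log p/n}$, $\nu\ge0$, $S=\{j:|\beta_j|>\sigma\nu\mu_n\}$ with $1\le k=|S|\le\bar k$, $S^c=\{1,\dots,p\}\setminus S$. Suppose $\|\beta_{S^c}\|_1\le\sigma\eta\mu_n$ with $\eta\ge0$, $\bar\eta=\eta/\bar k$, and suppose that for constants $s_{max}>0$, $\omega\in[0,1)$, $\nu_1,\tilde\nu_1\ge0$: $\lambda_{max}(\Sigma_{TT})\le s_{max}$ (and $\lambda_{min}(\Sigma_{TT})\ge s_{min}>0$) for all $|T|=k$; $\max_{j\notin T}\|\Sigma_{TT}^{-1}\Sigma_{Tj}\|_1\le\omega$ for all $|T|=k$; $\|\Sigma_{SS}^{-1}\Sigma_{SS^c}\beta_{S^c}\|_\infty\le\sigma\tilde\nu_1\mu_n$; and $\|\Sigma_{S^c|S}\beta_{S^c}\|_\infty\le\sigma\nu_1\mu_n$, where $\Sigma_{S^c|S}=\Sigma_{S^cS^c}-\Sigma_{S^cS}\Sigma_{SS}^{-1}\Sigma_{SS^c}$. Let $\theta_n=\bar k^{1/2}\mu_n$, $d=\sigma^2+\beta_{S^c}^{\mathrm T}\Sigma_{S^c|S}\beta_{S^c}$ and $g=\Sigma_{SS}^{-1}\Sigma_{SS^c}\beta_{S^c}$. Then (i) $d\le\sigma^2(1+\nu_1\bar\eta\,\theta_n^2)$, and (ii) $\|\Sigma_{SS}g\|^2\le\sig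ma^2s_{max}^2\tilde\nu_1^2\theta_n^2$.
   Context: $\Sigma_{AA'}$ is the submatrix with rows in $A$ and columns in $A'$; $\lambda_{min},\lambda_{max}$ denote extreme eigenvalues. *)

(* Defs.v *)
From HB Require Import structures.
From mathcomp Require Import all_boot all_order all_algebra.
From mathcomp Require Import reals exp.
Set Implicit Arguments. Unset Strict Implicit. Unset Printing Implicit Defensive.
Import Order.TTheory GRing.Theory Num.Theory.
Local Open Scope ring_scope.

(* Submatrix Sigma_{A A'}: rows in A, columns in A' (indices in increasing order). *)
Definition subm (R : Type) (p : nat) (A B : {set 'I_p}) (M : 'M[R]_p)
  : 'M[R]_(#|A|, #|B|) :=
  \matrix_(i < #|A|, j < #|B|) M (enum_val i) (enum_val j).

Definition subv (R : Type) (p : nat) (A : {set 'I_p}) (v : 'cV[R]_p)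
  : 'cV[R]_#|A| := \col_(i < #|A|) v (enum_val i) 0.

Definition subcol (R : Type) (p : nat) (A : {set 'I_p}) (M : 'M[R]_p) (j : 'I_p)
  : 'cV[R]_#|A| := \col_(i < #|A|) M (enum_val i) j.

Definition norm1 (R : numDomainType) (m : nat) (v : 'cV[R]_m) : R :=
  \sum_(i < m) `|v i 0|.
Definition norminf (R : realDomainType) (m : nat) (v : 'cV[R]_m) : R :=
  \big[Num.max/0]_(i < m) `|v i 0|.
Definition norm2sq (R : pzRingType) (m : nat) (v : 'cV[R]_m) : R :=
  \sum_(i < m) v i 0 ^+ 2.

Definition pos_def_corr (R : realDomainType) (p : nat) (M : 'M[R]_p) : Prop :=
  M^T = M /\ (forall i, M i i = 1) /\
  (forall x : 'cV[R]_p, x != 0 -> 0 < (x^T *m M *m x) 0 0).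

(* lambda_max(M) <= s : every eigenvalue of M is <= s
   (M symmetric real, so all eigenvalues are real). *)
Definition lambda_max_le (R : realFieldType) (m : nat) (M : 'M[R]_m) (s : R) : Prop :=
  forall a : R, eigenvalue M a -> a <= s.
Definition lambda_min_ge (R : realFieldType) (m : nat) (M : 'M[R]_m) (s : R) : Prop :=
  forall a : R, eigenvalue M a -> s <= a.

(* Main.v *)
Require Import Defs.
From HB Require Import structures.
From mathcomp Require Import all_boot all_order all_algebra.
From mathcomp Require Import reals exp.
From mathcomp Require Import all_classical all_reals topology normedtype derive.
From mathcomp Require Import ring lra.
Import Order.TTheory GRing.Theory Num.Theory.
Import numFieldNormedType.Exports.
Local Open Scope ring_scope.
Set Implicit Arguments. Unset Strict Implicit.

Section A.
Variable R : realType.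
Definition rsq {m} (v : 'rV[R]_m) : R := \sum_i v 0 i ^+ 2.

Lemma rsqE m (v : 'rV[R]_m) : rsq v = (v *m trmx v) 0 0.
Proof. rewrite /rsq !mxE; apply: eq_bigr => i _; by rewrite !mxE expr2. Qed.

Lemma rsq_ge0 m (v : 'rV[R]_m) : 0 <= rsq v.
Proof. by apply: sumr_ge0 => i _; rewrite sqr_ge0. Qed.

Lemma rsq_eq0 m (v : 'rV[R]_m) : rsq v = 0 -> v = 0.
Proof.
move=> /eqP; rewrite psumr_eq0 => [H|i _]; last by rewrite sqr_ge0.
apply/rowP => i; rewrite mxE; apply/eqP.
by have /implyP/(_ isT) := allP H i (mem_index_enum _); rewrite sqrf_eq0.
Qed.

Lemma rsqZ m a (v : 'rV[R]_m) : rsq (a *: v) = a ^+ 2 * rsq v.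
Proof. rewrite /rsq mulr_sumr; apply: eq_bigr => i _; by rewrite mxE exprMn. Qed.

Lemma sum_cont m (I : Type) (s : seq I) (F : I -> 'rV[R]_m -> R) :
  (forall i, continuous (F i)) -> continuous (fun v => \sum_(i <- s) F i v).
Proof.
move=> Fc; elim: s => [|a s IH].
  under eq_fun do rewrite big_nil. exact: cst_continuous.
under eq_fun do rewrite big_cons.
move=> x; apply: continuousD; [exact: Fc|exact: IH].
Qed.

Lemma rsqA_cont m n (A : 'M[R]_(m, n)) : continuous (fun v : 'rV[R]_m => rsq (v *m A)).
Proof.
rewrite /rsq; apply: sum_cont => i.
have H : continuous (fun v : 'rV[R]_m => (v *m A) 0 i).
  under eq_fun do rewrite mxE.
  apply: sum_cont => j y; apply: continuousM; first exact: coord_continuous.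
  exact: cst_continuous.
under eq_fun do rewrite expr2.
move=> x; apply: (continuousM (H x) (H x)).
Qed.

Lemma rsq_entry m (v : 'rV[R]_m) i : v 0 i ^+ 2 <= rsq v.
Proof.
rewrite /rsq (bigD1 i) //= lerDl; apply: sumr_ge0 => j _; exact: sqr_ge0.
Qed.

Lemma max_rayleigh m (A : 'M[R]_m.+1) :
  exists2 c : 'rV[R]_m.+1, rsq c = 1 &
    forall v, rsq (v *m A) <= rsq (c *m A) * rsq v.
Proof.
pose Sph := [set v : 'rV[R]_m.+1 | rsq v = 1]%classic.
have Sne : (Sph !=set0)%classic.
  exists (delta_mx 0 0); rewrite /Sph /= /rsq (bigD1 0) //= big1 => [|j /negbTE jn].
    by rewrite !mxE /= expr1n addr0.
  by rewrite !mxE jn andbF expr0n.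
have Scl : closed Sph.
  have -> : Sph = preimage (fun v : 'rV[R]_m.+1 => rsq (v *m 1%:M)) [set x | x = 1]%classic.
    by apply/seteqP; split => v /=; rewrite mulmx1.
  apply: preimage_closed; last exact: closed_eq.
  move=> x _; exact: rsqA_cont.
have Sbd : bounded_set Sph.
  exists 1; split; first exact: num_real.
  move=> M M1 v /= Sv.
  apply: le_trans (ltW M1).
  rewrite [X in X <= _]/Num.Def.normr /= mx_normrE.
  apply: bigmax_le => // ij _.
  have : `|v ij.1 ij.2| ^+ 2 <= 1 ^+ 2.
    rewrite real_normK ?num_real // expr1n -Sv.
    by rewrite (ord1 ij.1); exact: rsq_entry.
  by rewrite ler_pXn2r ?nnegrE //.
have [c Sc cmax] := EVT_max_rV Sne (bounded_closed_compact Sbd Scl)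
   (continuous_subspaceT (@rsqA_cont _ _ A)).
exists c; first by move: Sc; rewrite inE.
move=> v.
have [->|v0] := eqVneq v 0.
  have z : rsq (0 : 'rV[R]_m.+1) = 0 by rewrite /rsq big1 // => i _; rewrite mxE expr2 mulr0.
  by rewrite mul0mx !z mulr0.
have rp : 0 < rsq v.
  rewrite lt_neqAle rsq_ge0 andbT; apply/eqP => /esym /rsq_eq0; exact/eqP.
pose r := Num.sqrt (rsq v).
have r0 : 0 < r by rewrite sqrtr_gt0.
have rr : r ^+ 2 = rsq v by rewrite sqr_sqrtr // ltW.
have := cmax (r^-1 *: v); rewrite -scalemxAl !rsqZ.
have -> : r^-1 *: v \in Sph.
  by apply/mem_set; rewrite /Sph /= rsqZ exprVn rr mulVf // gt_eqF.
move=> /(_ isT) H; rewrite exprVn mulrC ler_pdivrMr ?exprn_gt0 // rr in H; exact H.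
Qed.

Lemma quad_exp m (C : 'M[R]_m) (c y : 'rV[R]_m) t : C^T = C ->
  ((c + t *: y) *m C *m (c + t *: y)^T) 0 0 =
  (c *m C *m c^T) 0 0 + 2 * t * (c *m C *m y^T) 0 0 + t ^+ 2 * (y *m C *m y^T) 0 0.
Proof.
move=> CT.
have sw : y *m C *m c^T = c *m C *m y^T.
  apply/matrixP => i j; rewrite !ord1.
  transitivity ((y *m C *m c^T)^T 0 0); first by rewrite [RHS]mxE.
  by rewrite !trmx_mul trmxK CT mulmxA.
rewrite [(c + t *: y)^T]linearD /= [(t *: y)^T]linearZ /= !mulmxDl !mulmxDr -!scalemxAl -!scalemxAr.
rewrite sw; set P := c *m C *m c^T; set Q := c *m C *m y^T; set T := y *m C *m y^T.
rewrite !mxE; ring.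
Qed.

Lemma opbound m (A : 'M[R]_m) s smin :
  A^T = A -> (forall a, eigenvalue A a -> a <= s) ->
  (forall a, eigenvalue A a -> smin <= a) -> 0 < smin -> 0 <= s ->
  forall v : 'rV[R]_m, rsq (v *m A) <= s ^+ 2 * rsq v.
Proof.
move=> AT Hmax Hmin smin0 s0.
case: m A AT Hmax Hmin => [|m] A AT Hmax Hmin v.
  by rewrite /rsq !big_ord0 mulr0.
have [c c1 cmax] := @max_rayleigh m A.
set l := rsq (c *m A) in cmax.
suff : l <= s ^+ 2.
  move=> ls; apply: le_trans (cmax v) _; apply: ler_wpM2r => //; exact: rsq_ge0.
pose C := l%:M - A *m A^T.
have CT : C^T = C by rewrite /C linearB /= tr_scalar_mx trmx_mul trmxK.
have QE (z : 'rV[R]_m.+1) : (z *m C *m z^T) 0 0 = l * rsq z - rsq (z *m A).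
  rewrite !rsqE /C mulmxBr mulmxBl mul_mx_scalar -scalemxAl trmx_mul !mulmxA.
  set P := z *m z^T; set Q := z *m A *m A^T *m z^T; by rewrite !mxE.
have Qge (z : 'rV[R]_m.+1) : 0 <= (z *m C *m z^T) 0 0.
  by rewrite QE subr_ge0; exact: cmax.
have Qc : (c *m C *m c^T) 0 0 = 0 by rewrite QE c1 mulr1 subrr.
pose w := c *m C.
have w0 : w = 0.
  apply: rsq_eq0.
  pose W := rsq w; pose q := (w *m C *m w^T) 0 0.
  have Wq : (c *m C *m w^T) 0 0 = W by rewrite /W rsqE.
  have q0 : 0 <= q := Qge w.
  have W0 : 0 <= W := @rsq_ge0 _ w.
  have q1 : 0 < q + 1 by rewrite ltr_wpDl.
  pose u := (q + 1)^-1.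
  have uq : u * (q + 1) = 1 by rewrite mulVf // gt_eqF.
  have u0 : 0 < u by rewrite invr_gt0.
  have H := Qge (c + (- (W * u)) *: w).
  rewrite quad_exp // Qc Wq -/q add0r in H.
  apply/eqP; rewrite -/W -sqrf_eq0 eq_le sqr_ge0 andbT.
  have uq1 : u * q <= 1 by nra.
  have E : 2 * - (W * u) * W + (- (W * u)) ^+ 2 * q = W ^+ 2 * u * (u * q - 2) by ring.
  rewrite E in H.
  have H3 : W ^+ 2 * u * (u * q - 2) <= - (W ^+ 2 * u).
    have : 0 <= W ^+ 2 * u by rewrite mulr_ge0 ?sqr_ge0 // ltW.
    nra.
  have : W ^+ 2 * u <= 0 by lra.
  by rewrite pmulr_lle0.
have lc : l *: c = c *m A *m A.
  apply/eqP; rewrite -subr_eq0; apply/eqP.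
  move: w0; rewrite /w /C mulmxBr mul_mx_scalar AT mulmxA => ->.
  by [].
have l0 : 0 <= l := rsq_ge0 _.
pose mu := Num.sqrt l.
have mu0 : 0 <= mu := sqrtr_ge0 l.
have mumu : mu ^+ 2 = l by rewrite sqr_sqrtr.
have c0 : c != 0.
  by apply/eqP => c0; move: c1; rewrite c0 /rsq big1 // => [|i _]; [move/eqP; rewrite eq_sym oner_eq0 | rewrite mxE expr2 mulr0].
suff : mu <= s.
  by move=> ms; rewrite -mumu ler_pXn2r // nnegrE.
pose x := c *m A + mu *: c.
have xA : x *m A = mu *: x.
  rewrite /x mulmxDl -lc -scalemxAl scalerDr scalerA -expr2 mumu addrC.
  by [].
have [x0|xn0] := eqVneq x 0.
  have : eigenvalue A (- mu).
    apply/eigenvalueP; exists c => //.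
    by move/eqP: x0; rewrite /x addr_eq0 => /eqP ->; rewrite scaleNr.
  move/Hmin => H; exfalso; move: (lt_le_trans smin0 H); rewrite oppr_gt0 ltNge mu0.
  by [].
apply: Hmax; apply/eigenvalueP; exists x => //.
Qed.

Lemma norm2sq_rsq m (x : 'cV[R]_m) : norm2sq x = rsq x^T.
Proof. by rewrite /norm2sq /rsq; apply: eq_bigr => i _; rewrite mxE. Qed.

Lemma norminf_ge0 m (x : 'cV[R]_m) : 0 <= norminf x.
Proof. exact: bigmax_ge_id. Qed.

Lemma entry_le_norminf m (x : 'cV[R]_m) i : `|x i 0| <= norminf x.
Proof. rewrite /norminf; exact: le_bigmax. Qed.

Lemma norm1_ge0 m (x : 'cV[R]_m) : 0 <= norm1 x.
Proof. by apply: sumr_ge0 => i _. Qed.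

Lemma dot_le m (x y : 'cV[R]_m) : (x^T *m y) 0 0 <= norm1 x * norminf y.
Proof.
rewrite mxE /norm1 mulr_suml; apply: ler_sum => i _; rewrite mxE.
apply: le_trans (ler_norm _) _; rewrite normrM.
by apply: ler_wpM2l => //; exact: entry_le_norminf.
Qed.

Lemma norm2sq_le m (x : 'cV[R]_m) : norm2sq x <= m%:R * norminf x ^+ 2.
Proof.
rewrite /norm2sq.
have -> : m%:R * norminf x ^+ 2 = \sum_(i < m) norminf x ^+ 2 by rewrite sumr_const card_ord mulr_natl.
apply: ler_sum => i _.
rewrite -real_normK ?num_real // ler_pXn2r ?nnegrE ?normr_ge0 ?norminf_ge0 //.
exact: entry_le_norminf.
Qed.

End A.

Theorem lemma6 (R : realType) (p n : nat) (Sigma : 'M[R]_p) (beta : 'cV[R]_p)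
  (sigma nu eta kbar smax smin omega nu1 tnu1 : R) :
  pos_def_corr Sigma ->
  0 < sigma -> (1 <= n)%N -> 0 <= nu ->
  let mu := Num.sqrt (2 * ln (p%:R) / n%:R) in
  let S := [set j : 'I_p | sigma * nu * mu < `|beta j 0|] in
  let Sc := ~: S in
  let k := #|S| in
  (1 <= k)%N -> k%:R <= kbar ->
  let bSc := subv Sc beta in
  norm1 bSc <= sigma * eta * mu -> 0 <= eta ->
  let etabar := eta / kbar in
  0 < smax -> 0 <= omega < 1 -> 0 <= nu1 -> 0 <= tnu1 -> 0 < smin ->
  (forall T : {set 'I_p}, #|T| = k ->
     lambda_max_le (subm T T Sigma) smax /\ lambda_min_ge (subm T T Sigma) smin) ->
  (forall T : {set 'I_p}, #|T| = k ->
     forall j : 'I_p, j \notin T ->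
       norm1 (invmx (subm T T Sigma) *m subcol T Sigma j) <= omega) ->
  norminf (invmx (subm S S Sigma) *m subm S Sc Sigma *m bSc) <= sigma * tnu1 * mu ->
  let SigScS := subm Sc Sc Sigma
      - subm Sc S Sigma *m invmx (subm S S Sigma) *m subm S Sc Sigma in
  norminf (SigScS *m bSc) <= sigma * nu1 * mu ->
  let theta := Num.sqrt kbar * mu in
  let d := sigma ^+ 2 + (bSc^T *m SigScS *m bSc) 0 0 in
  let g := invmx (subm S S Sigma) *m subm S Sc Sigma *m bSc in
  d <= sigma ^+ 2 * (1 + nu1 * etabar * theta ^+ 2) /\
  norm2sq (subm S S Sigma *m g) <= sigma ^+ 2 * smax ^+ 2 * tnu1 ^+ 2 * theta ^+ 2.
Proof.
move=> PD sig0 n1 nu0 mu S Sc k k1 kk bSc hb1 eta0 etabar smax0 /andP[om0 om1]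
  nu10 tnu0 smin0 Hlam Hom Hg SigScS Hsc theta d g.
have mu0 : 0 <= mu := sqrtr_ge0 _.
have kb1 : 1 <= kbar by apply: le_trans _ kk; rewrite ler1n.
have kb0 : 0 < kbar by apply: lt_le_trans kb1.
have th2 : theta ^+ 2 = kbar * mu ^+ 2 by rewrite /theta exprMn sqr_sqrtr // ltW.
split.
  rewrite /d mulrDr mulr1 lerD2l th2 /etabar.
  have -> : sigma ^+ 2 * (nu1 * (eta / kbar) * (kbar * mu ^+ 2))
      = (sigma * eta * mu) * (sigma * nu1 * mu) by field; rewrite gt_eqF.
  rewrite -mulmxA; apply: le_trans (dot_le _ _) _.
  apply: ler_pM => //; [exact: norm1_ge0 | exact: norminf_ge0].
have [Ssym [_ _]] := PD.
set A := subm S S Sigma.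
have AT : A^T = A.
  apply/matrixP => i j; rewrite !mxE.
  by rewrite -[in LHS]Ssym mxE.
have [Hmax Hmin] := Hlam S erefl.
have step1 : norm2sq (A *m g) <= smax ^+ 2 * norm2sq g.
  rewrite !norm2sq_rsq trmx_mul AT.
  exact: (opbound AT Hmax Hmin smin0 (ltW smax0)).
apply: le_trans step1 _.
have step2 := norm2sq_le g.
have Ng : norminf g <= sigma * tnu1 * mu := Hg.
have Ng0 := norminf_ge0 g.
have step3 : norm2sq g <= kbar * (sigma * tnu1 * mu) ^+ 2.
  apply: le_trans step2 _; apply: ler_pM => //.
    by rewrite exprn_ge0.
  by rewrite ler_pXn2r ?nnegrE ?mulr_ge0 // ltW.
rewrite th2.
have -> : sigma ^+ 2 * smax ^+ 2 * tnu1 ^+ 2 * (kbar * mu ^+ 2)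
   = smax ^+ 2 * (kbar * (sigma * tnu1 * mu) ^+ 2) by ring.
by apply: ler_wpM2l => //; rewrite exprn_ge0 // ltW.
Qed.
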